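(* Every simple binary matroid has a unique minimal tropical basis.
   Context: A matroid $M=([n],\mathscr C)$ is given by its circuit set $\mathscr C$. It is simple if every circuit has cardinality greater than $2$, and binary if it is representable over $\mathbb F_2$. Let ${\bf TP}^{n-1}$ be the tropical projective space over the tropical semifield $(\mathbb R\cup\{-\infty\},\max,+)$. For a circuit $C$, $V(C)$ is the set of points $x\in{\bf TP}^{n-1}$ such that the maximum of $\{x_i : i\in C\}$ is attained at least twice. For $B\subseteq\mathscr C$, set $V(B)=\bigcap_{C\in B}V(C)$. The Bergman fan of $M$ is $V(\mathscr C)$. A subset $B\subseteq\mathscr C$ is a tropical basis if $V(B)=V(\mathscr C)$. A tropical basis is minimal if no proper subset of it is a tropical basis. *)

(* Defs.v *)
From HB Require Import structures.
From mathcomp Require Import all_boot all_order all_algebra.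
From mathcomp Require Import reals.
Set Implicit Arguments. Unset Strict Implicit. Unset Printing Implicit Defensive.
Import Order.TTheory GRing.Theory Num.Theory.
Local Open Scope ring_scope.

Definition matroid_circuits (n : nat) (Cs : {set {set 'I_n}}) : Prop :=
  [/\ set0 \notin Cs,
      (forall C1 C2, C1 \in Cs -> C2 \in Cs -> C1 \subset C2 -> C1 = C2) &
      (forall C1 C2 e, C1 \in Cs -> C2 \in Cs -> C1 != C2 ->
         e \in C1 :&: C2 -> exists2 C3, C3 \in Cs & C3 \subset (C1 :|: C2) :\ e)].

Definition col_dependent (m n : nat) (A : 'M['F_2]_(m, n)) (S : {set 'I_n}) : bool :=
  [exists c : 'cV['F_2]_n,
     [&& c != 0, [forall i, (c i 0 != 0) ==> (i \in S)] & A *m c == 0]].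

Definition col_circuits (m n : nat) (A : 'M['F_2]_(m, n)) : {set {set 'I_n}} :=
  [set S | minset (col_dependent A) S].

Definition binary (n : nat) (Cs : {set {set 'I_n}}) : Prop :=
  exists m (A : 'M['F_2]_(m, n)), Cs = col_circuits A.

Definition simple (n : nat) (Cs : {set {set 'I_n}}) : Prop :=
  forall C, C \in Cs -> (2 < #|C|)%N.

(* Tropical semifield R ∪ {-oo}: None stands for -oo. *)
Definition trop_le (R : realType) (a b : option R) : bool :=
  match a, b with
  | None, _ => true
  | Some _, None => false
  | Some x, Some y => x <= y
  end.

(* Representatives of points of TP^{n-1}: vectors not identically -oo.
   (All sets V(_) below are invariant under adding a real constant, so they
   are described on representatives.) *)
Definition TP_point (R : realType) (n : nat) (x : 'I_n -> option R) : Prop :=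
  exists i, x i != None.

Definition in_V (R : realType) (n : nat) (C : {set 'I_n}) (x : 'I_n -> option R) : Prop :=
  exists i j, [/\ i \in C, j \in C, i != j, x i = x j &
                  forall k, k \in C -> trop_le (x k) (x i)].

Definition in_VB (R : realType) (n : nat) (B : {set {set 'I_n}}) (x : 'I_n -> option R) : Prop :=
  forall C, C \in B -> in_V C x.

Definition tropical_basis (R : realType) (n : nat) (Cs B : {set {set 'I_n}}) : Prop :=
  B \subset Cs /\
  (forall x : 'I_n -> option R, TP_point x -> (in_VB B x <-> in_VB Cs x)).

Definition minimal_tropical_basis (R : realType) (n : nat) (Cs B : {set {set 'I_n}}) : Prop :=
  tropical_basis R Cs B /\ (forall B' : {set {set 'I_n}}, B' \proper B -> ~ tropical_basis R Cs B').

(* Main.v *)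
Require Import Defs.
From mathcomp Require Import all_boot all_order all_algebra.
From mathcomp Require Import reals.
From Stdlib Require Import Classical.
From mathcomp Require Import zify.
Set Implicit Arguments. Unset Strict Implicit. Unset Printing Implicit Defensive.
Import Order.TTheory GRing.Theory Num.Theory.
Local Open Scope ring_scope.

Lemma F2_val (a : 'F_2) : a = (a != 0)%:R.
Proof. by case: a => [[|[|m]] Hm] //; apply/val_inj. Qed.

Lemma F2_add (a b : bool) : (a%:R + b%:R : 'F_2) = (a (+) b)%:R.
Proof. by case: a; case: b => //; apply/val_inj. Qed.

Section Lin.
Variables (m n : nat) (A : 'M['F_2]_(m, n)).

Definition ind (S : {set 'I_n}) : 'cV['F_2]_n := \col_i (i \in S)%:R.

Lemma ind_add S T : ind S + ind T = ind ((S :\: T) :|: (T :\: S)).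
Proof.
apply/matrixP => i j; rewrite !mxE F2_add !inE.
by case: (i \in S); case: (i \in T).
Qed.

Lemma ind_supp (c : 'cV['F_2]_n) : c = ind [set i | c i 0 != 0].
Proof.
apply/matrixP => i j; rewrite !mxE inE (ord1 j); exact: F2_val.
Qed.

Lemma ind_neq0 (S : {set 'I_n}) : S != set0 -> ind S != 0.
Proof.
case/set0Pn => i Hi; apply/eqP => /matrixP /(_ i 0); rewrite !mxE Hi /=.
by move/eqP; rewrite oner_eq0.
Qed.

Lemma depP (S : {set 'I_n}) : reflect (exists2 T, T != set0 & (T \subset S) && (A *m ind T == 0))
  (col_dependent A S).
Proof.
apply: (iffP existsP) => [[c /and3P [c0 /forallP sc Ac]] | [T T0 /andP [TS AT]]].
  exists [set i | c i 0 != 0].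
    apply: contra c0 => /eqP e; apply/eqP; rewrite [c]ind_supp e.
    by apply/matrixP => i j; rewrite !mxE inE.
  apply/andP; split; last by rewrite -ind_supp.
  by apply/subsetP => i; rewrite inE => /(implyP (sc i)).
exists (ind T); rewrite ind_neq0 //= AT andbT; apply/forallP => i; apply/implyP.
by rewrite mxE; case: (i \in T) (subsetP TS i) => // -> //; rewrite eqxx.
Qed.

Lemma circ_ind C : C \in col_circuits A -> A *m ind C = 0.
Proof.
rewrite inE => /minsetP [/depP [T T0 /andP [TC AT]] minC].
have dT : col_dependent A T by apply/depP; exists T => //; rewrite subxx.
by rewrite -(minC T dT TC); apply/eqP.
Qed.

End Lin.

Section Lin2.
Variables (m n : nat) (A : 'M['F_2]_(m, n)).

Lemma no_dep_sub (C D T : {set 'I_n}) : C \in col_circuits A -> C :&: D != set0 ->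
  T \subset C :\: D -> ~~ col_dependent A T.
Proof.
rewrite inE => /minsetP [_ minC] CD TCD; apply/negP => dT.
have TC : T \subset C by apply: subset_trans TCD (subsetDl _ _).
move: (minC T dT TC) => eTC; subst T.
case/set0Pn: CD => i; rewrite inE => /andP [iC iD].
by move: (subsetP TCD i iC); rewrite inE iD.
Qed.

Lemma dep_of (T : {set 'I_n}) : T != set0 -> A *m ind T = 0 -> col_dependent A T.
Proof. by move=> T0 AT; apply/depP; exists T => //; rewrite subxx AT eqxx. Qed.

Lemma sym_circ (C D : {set 'I_n}) f : C \in col_circuits A -> D \in col_circuits A ->
  D :\: C = [set f] -> C :&: D != set0 -> (C :\: D) :|: [set f] \in col_circuits A.
Proof.
move=> Cc Dc DCf CD.
set S := (C :\: D) :|: [set f].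
have fS : f \in S by rewrite !inE eqxx orbT.
have S0 : S != set0 by apply/set0Pn; exists f.
have AS : A *m ind S = 0.
  by rewrite /S -DCf -ind_add mulmxDr !circ_ind // addr0.
rewrite inE; apply/minsetP; split; first exact: dep_of.
move=> T /depP [T' T'0 /andP [T'T /eqP AT']] TS.
have T'S : T' \subset S by apply: subset_trans TS.
have fT' : f \in T'.
  apply/negPn/negP => fT'.
  have : T' \subset C :\: D.
    apply/subsetP => i iT'; move: (subsetP T'S i iT'); rewrite /S !inE.
    by case/orP => // /eqP ei; subst i; rewrite iT' in fT'.
  by move/(no_dep_sub Cc CD); rewrite dep_of.
have ST' : S :\: T' = set0.
  apply/eqP/negPn/negP => ne.
  have : S :\: T' \subset C :\: D.
    apply/subsetP => i; rewrite /S !inE => /andP [iT]; case/orP => // /eqP ei.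
    by subst i; rewrite fT' in iT.
  move/(no_dep_sub Cc CD); rewrite dep_of //.
  have -> : S :\: T' = (S :\: T') :|: (T' :\: S).
    have /eqP -> : T' :\: S == set0 by rewrite setD_eq0.
    by rewrite setU0.
  by rewrite -ind_add mulmxDr AS AT' addr0.
apply/eqP; rewrite eqEsubset TS /=; apply: subset_trans T'T.
by apply/subsetP => i iS; apply/negPn/negP => iT; move/setP/(_ i): ST'; rewrite in_setD iS iT inE.
Qed.

End Lin2.

Section Trop.
Variable R : realType.
Implicit Types a b c : option R.

Definition trop_lt a b := ~~ trop_le b a.

Lemma trop_total a b : trop_le a b || trop_le b a.
Proof. case: a => [x|]; case: b => [y|] //=; exact: le_total. Qed.

Lemma trop_refl a : trop_le a a.
Proof. by case: a => [x|] //=; rewrite lexx. Qed.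

Lemma trop_trans a b c : trop_le a b -> trop_le b c -> trop_le a c.
Proof. case: a => [x|]; case: b => [y|]; case: c => [z|] //=; exact: le_trans. Qed.

Lemma trop_anti a b : trop_le a b -> trop_le b a -> a = b.
Proof. case: a => [x|]; case: b => [y|] //= h1 h2; congr Some; apply/eqP; rewrite eq_le h1 h2 //. Qed.

Lemma trop_ltW a b : trop_lt a b -> trop_le a b.
Proof. rewrite /trop_lt => h; case/orP: (trop_total a b) => // hh; by rewrite hh in h. Qed.

Lemma trop_lt_le a b c : trop_lt a b -> trop_le b c -> trop_lt a c.
Proof. by rewrite /trop_lt => h1 h2; apply: contra h1 => h; apply: trop_trans h2 h. Qed.

Variable n : nat.
Implicit Types (x : 'I_n -> option R) (C D T : {set 'I_n}).

Definition violated C x e := e \in C /\ forall k, k \in C -> k != e -> trop_lt (x k) (x e).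

Lemma viol_notV C x e : violated C x e -> ~ in_V C x.
Proof.
move=> [eC he] [i [j [iC jC ij xij hmax]]].
case: (eqVneq i e) => [ie | ie].
  subst i; have := he j jC; rewrite eq_sym ij => /(_ isT).
  by rewrite xij /trop_lt trop_refl.
by have := he i iC ie; rewrite /trop_lt (hmax e eC).
Qed.

Lemma max_seq x (s : seq 'I_n) : s != [::] ->
  exists2 e, e \in s & forall k, k \in s -> trop_le (x k) (x e).
Proof.
elim: s => // a s IH _; case: (eqVneq s [::]) => [-> | /IH [e es he]].
  by exists a; rewrite ?inE // => k; rewrite inE => /eqP ->; rewrite trop_refl.
case/orP: (trop_total (x a) (x e)) => h.
  exists e; first by rewrite inE es orbT.
  by move=> k; rewrite inE => /orP [/eqP -> // | /he].
exists a; first by rewrite inE eqxx.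
by move=> k; rewrite inE => /orP [/eqP -> | /he hk]; [rewrite trop_refl | apply: trop_trans hk h].
Qed.

Lemma notV_viol C x : C != set0 -> ~ in_V C x -> exists e, violated C x e.
Proof.
move=> C0 nV.
have [e eC he] : exists2 e, e \in C & forall k, k \in C -> trop_le (x k) (x e).
  have : enum C != [::].
    case/set0Pn: C0 => i iC; apply/eqP => h; by move: (mem_enum (mem C) i); rewrite h iC.
  by case/(max_seq x) => e; rewrite mem_enum => eC he; exists e => // k kC; apply: he; rewrite mem_enum.
exists e; split => // k kC ke; apply/negP => hle.
apply: nV; exists e, k; split => //; first by rewrite eq_sym.
  by apply: trop_anti => //; apply: he.
Qed.

Lemma viol_gen C T x e e' : violated C x e -> e' \in T -> trop_le (x e) (x e') ->
  (forall k, k \in T -> k != e' -> (k \in C /\ k != e) \/ trop_lt (x k) (x e')) ->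
  violated T x e'.
Proof.
move=> [eC he] e'T hle hT; split => // k kT ke'.
case: (hT k kT ke') => // [[kC ke]].
exact: trop_lt_le (he k kC ke) hle.
Qed.

End Trop.

Section Main.
Variables (R : realType) (m n : nat) (A : 'M['F_2]_(m, n)).
Let Cs := col_circuits A.
Hypothesis simp : simple Cs.

Definition Ess := [set C in Cs | [forall D in Cs, #|D :\: C| != 1%N]].

Lemma reduce (x : 'I_n -> option R) k : forall (C : {set 'I_n}) e, (#|C| <= k)%N -> C \in Cs ->
  violated C x e -> exists C' e', C' \in Ess /\ violated C' x e'.
Proof.
elim: k => [|k IH] C e Ck CC hv.
  by have := simp CC; rewrite ltnNge (leq_trans Ck).
case: (boolP (C \in Ess)) => [CE | ]; first by exists C, e.
rewrite inE CC /= negb_forall => /existsP [D]; rewrite negb_imply negbK => /andP [DC /cards1P [f DCf]].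
have D3 := simp DC; have S3 := simp CC.
have hID := cardsID D C; have hIC := cardsID C D.
have fD : f \in D :\: C by rewrite DCf inE.
move: (fD); rewrite inE => /andP [fC fD'].
have CD : C :&: D != set0.
  apply/set0Pn; apply/card_gt0P; rewrite setIC; move: hIC; rewrite DCf cards1; lia.
set S := (C :\: D) :|: [set f].
have SC : S \in Cs by apply: sym_circ.
have hS := simp SC.
have hSle : (#|S| <= #|C :\: D| + 1)%N by rewrite cardsU cards1; lia.
have hCD : #|C :&: D| = #|D :&: C| by rewrite setIC.
have hDC : #|D :\: C| = 1%N by rewrite DCf cards1.
have Dk : (#|D| <= k)%N by lia.
have Sk : (#|S| <= k)%N by lia.
have [eC he] := hv.
have fe : f != e by apply: contraNneq fC => ->.
have DinC : forall j, j \in D -> j != f -> j \in C.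
  move=> j jD jf; apply/negPn/negP => jC.
  have : j \in D :\: C by rewrite inE jC.
  by rewrite DCf inE (negbTE jf).
have SinC : forall j, j \in S -> j != f -> (j \in C) && (j \notin D).
  by move=> j; rewrite !inE => /orP [/andP [-> ->] // | ->].
case: (boolP (trop_le (x e) (x f))) => hef; case: (boolP (e \in D)) => eD.
- apply: (IH S f Sk SC); apply: (viol_gen hv) => //; first by rewrite !inE eqxx orbT.
  move=> j jS jf; left; have /andP [jC jD] := SinC j jS jf; split => //.
  by apply: contraNneq jD => ->.
- apply: (IH D f Dk DC); apply: (viol_gen hv) => //.
  move=> j jD jf; left; split; first exact: DinC.
  by apply: contraNneq eD => <-.
- apply: (IH D e Dk DC); apply: (viol_gen hv) => //; first exact: trop_refl.
  move=> j jD je; case: (eqVneq j f) => [-> | jf]; first by right.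
  by left; split => //; apply: DinC.
- apply: (IH S e Sk SC); apply: (viol_gen hv) => //; first by rewrite !inE eC eD.
    exact: trop_refl.
  move=> j jS je; case: (eqVneq j f) => [-> | jf]; first by right.
  by left; have /andP [jC _] := SinC j jS jf.
Qed.


Lemma Ess_sub : Ess \subset Cs.
Proof. by apply/subsetP => C; rewrite inE => /andP []. Qed.

Lemma Ess_basis : tropical_basis R Cs Ess.
Proof.
split; first exact: Ess_sub.
move=> x _; split => [hE C CC | hC C CE]; last by apply: hC; apply: (subsetP Ess_sub).
apply: NNPP => nV.
have C0 : C != set0 by apply/set0Pn/card_gt0P; have := simp CC; lia.
have [e he] := notV_viol C0 nV.
have [C' [e' [C'E hv']]] := reduce (leqnn #|C|) CC he.
exact: (viol_notV hv' (hE C' C'E)).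
Qed.

Lemma Ess_needed B : tropical_basis R Cs B -> Ess \subset B.
Proof.
move=> [BCs hB]; apply/subsetP => C CE; apply/negPn/negP => CB.
move: (CE); rewrite inE => /andP [CC /forallP hD].
have [e eC] : exists e, e \in C.
  by apply/card_gt0P; have := simp CC; lia.
pose x : 'I_n -> option R := fun k => Some (if k \in C then (if k == e then 1 else 0) else 2).
have hv : violated C x e.
  split => // k kC ke; rewrite /trop_lt /x kC eqxx (negbTE ke) /=.
  by rewrite eC ler10.
have : in_VB B x.
  move=> D DB; have DC := subsetP BCs D DB.
  have DnC : D != C by apply: contraNneq CB => <-.
  have := hD D; rewrite DC /= => h1.
  have h0 : #|D :\: C| != 0%N.
    apply: contra DnC; rewrite cards_eq0 setD_eq0 => DsC.
    move: CC; rewrite inE => /minsetP [_ minC]; apply/eqP; apply: minC => //.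
    by move: DC; rewrite inE => /minsetp.
  have : (1 < #|D :\: C|)%N by move: h1 h0; case: #|D :\: C| => [|[|]].
  case/card_gt1P => i [j [iD jD ij]].
  move: iD jD; rewrite !inE => /andP [iC iD] /andP [jC jD].
  exists i, j; split => //; first by rewrite /x (negbTE iC) (negbTE jC).
  move=> k kD; rewrite /x (negbTE iC) /=.
  case: (k \in C); last exact: lexx.
  case: (k == e).
    by rewrite ler1n.
  by rewrite ler0n.
move=> hBx; apply: (viol_notV hv); apply: (proj1 (hB x _)) => //.
by exists e.
Qed.

End Main.

Theorem theorem4 (R : realType) (n : nat) (Cs : {set {set 'I_n}}) :
  matroid_circuits Cs -> binary Cs -> simple Cs ->
  exists! B : {set {set 'I_n}}, minimal_tropical_basis R Cs B.
Proof.
move=> _ [m [A ->]] simp.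
exists (Ess A); split.
  split; first exact: Ess_basis.
  move=> B' /properP [_ [C CE CB']] hB'.
  by move: (subsetP (Ess_needed simp hB') C CE); rewrite (negbTE CB').
move=> B [hB minB]; have EB := Ess_needed simp hB.
case: (eqVneq (Ess A) B) => // nBE.
exfalso; apply: (minB (Ess A)); last exact: Ess_basis.
by rewrite properEneq nBE EB.
Qed.
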